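(* Let $T$ be any complete first-order theory. Then $\mathfrak C$ contains no infinite indiscernible set if and only if there are $n<\omega$ and a formula $\varphi(x_0,\dots,x_{n-1})$ such that for all pairwise distinct $a_0,\dots,a_{n-1}\in\mathfrak C$ there are permutations $\pi_1,\pi_2$ of $\{0,\dots,n-1\}$ with $\mathfrak C\models\varphi[a_{\pi_1(0)},\dots,a_{\pi_1(n-1)}]\wedge\neg\varphi[a_{\pi_2(0)},\dots,a_{\pi_2(n-1)}]$.
   Context: $\mathfrak C$ is the monster model of $T$. An indiscernible set is a set $\mathbf I$ of elements such that for each $n$, all $n$-tuples of pairwise distinct elements of $\mathbf I$ have the same type. *)

(* Defs.v *)
From mathcomp Require Import all_boot perm.
From Stdlib Require Import List.

Set Implicit Arguments.
Unset Strict Implicit.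
Unset Printing Implicit Defensive.

Record language := Language {
  Fsym : Type;            (* function symbols (constants = arity 0) *)
  Rsym : Type;
  farity : Fsym -> nat;
  rarity : Rsym -> nat }.

Section FOL.
Variable L : language.

Inductive term : Type :=
  | tvar : nat -> term
  | tapp : forall f : Fsym L, ('I_(farity f) -> term) -> term.

Inductive formula : Type :=
  | fFalse : formula
  | fEq : term -> term -> formula
  | fRel : forall r : Rsym L, ('I_(rarity r) -> term) -> formula
  | fNot : formula -> formula
  | fAnd : formula -> formula -> formula
  | fOr : formula -> formula -> formula
  | fImp : formula -> formula -> formula
  | fAll : nat -> formula -> formula
  | fEx : nat -> formula -> formula.

Fixpoint occurs (v : nat) (t : term) : Prop :=
  match t with
  | tvar w => v = w
  | tapp f ts => exists i, occurs v (ts i)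
  end.

Fixpoint free (v : nat) (phi : formula) : Prop :=
  match phi with
  | fFalse => False
  | fEq t s => occurs v t \/ occurs v s
  | fRel r ts => exists i, occurs v (ts i)
  | fNot p => free v p
  | fAnd p q | fOr p q | fImp p q => free v p \/ free v q
  | fAll w p | fEx w p => v <> w /\ free v p
  end.

Definition sentence (phi : formula) : Prop := forall v, ~ free v phi.

Record structure := Structure {
  dom :> Type;
  dom_inh : dom;
  funs : forall f : Fsym L, ('I_(farity f) -> dom) -> dom;
  rels : forall r : Rsym L, ('I_(rarity r) -> dom) -> Prop }.

Definition upd (M : structure) (a : nat -> M) (v : nat) (b : M) : nat -> M :=
  fun w => if w == v then b else a w.

Fixpoint eval (M : structure) (a : nat -> M) (t : term) : M :=
  match t with
  | tvar n => a n
  | tapp f ts => @funs M f (fun i => eval a (ts i))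
  end.

Fixpoint sat (M : structure) (a : nat -> M) (phi : formula) : Prop :=
  match phi with
  | fFalse => False
  | fEq t s => eval a t = eval a s
  | fRel r ts => @rels M r (fun i => eval a (ts i))
  | fNot p => ~ sat a p
  | fAnd p q => sat a p /\ sat a q
  | fOr p q => sat a p \/ sat a q
  | fImp p q => sat a p -> sat a q
  | fAll v p => forall b : M, sat (upd a v b) p
  | fEx v p => exists b : M, sat (upd a v b) p
  end.

Definition theory := formula -> Prop.

Definition is_theory (T : theory) : Prop := forall phi, T phi -> sentence phi.

Definition models (M : structure) (T : theory) : Prop :=
  forall phi, T phi -> forall a : nat -> M, sat a phi.

Definition entails (T : theory) (phi : formula) : Prop :=
  forall (M : structure), models M T -> forall a : nat -> M, sat a phi.

Definition complete_theory (T : theory) : Prop :=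
  is_theory T /\ (exists M : structure, models M T) /\
  forall phi, sentence phi -> entails T phi \/ entails T (fNot phi).

(** omega-saturation: every 1-type over finitely many parameters
    (the values of [a] at the variables in [P]) that is finitely
    satisfiable in M is realized in M. *)
Definition omega_saturated (M : structure) : Prop :=
  forall (Sigma : formula -> Prop) (P : list nat) (v : nat) (a : nat -> M),
    (forall phi, Sigma phi -> forall w, free w phi -> w = v \/ In w P) ->
    (forall l : list formula, (forall phi, In phi l -> Sigma phi) ->
       exists b : M, forall phi, In phi l -> sat (upd a v b) phi) ->
    exists b : M, forall phi, Sigma phi -> sat (upd a v b) phi.

(** Tuples: the assignment x_i |-> c i for i < n (default elsewhere). *)
Definition tassign (M : structure) (n : nat) (c : 'I_n -> M) : nat -> M :=
  fun k => match insub k with Some i => c i | None => dom_inh M end.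

Definition fv_below (n : nat) (phi : formula) : Prop :=
  forall w, free w phi -> w < n.

Definition finite_set (M : structure) (I : M -> Prop) : Prop :=
  exists l : list M, forall x, I x -> In x l.

Definition indiscernible_set (M : structure) (I : M -> Prop) : Prop :=
  forall (n : nat) (c d : 'I_n -> M),
    injective c -> injective d ->
    (forall i, I (c i)) -> (forall i, I (d i)) ->
    forall phi, fv_below n phi ->
      (sat (tassign c) phi <-> sat (tassign d) phi).

End FOL.

(* Main.v *)
Require Import Defs.
From mathcomp Require Import all_boot perm zify.
From Stdlib Require Import List Classical FunctionalExtensionality ClassicalEpsilon.
Set Implicit Arguments. Unset Strict Implicit. Unset Printing Implicit Defensive.


Lemma eval_coinc {L} {M : structure L} (a b : nat -> M) (t : term L) :
  (forall w, occurs w t -> a w = b w) -> eval a t = eval b t.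
Proof.
elim: t => [n|f ts IH] H /=; first by apply: H.
f_equal. apply: functional_extensionality => i. apply: IH => w Hw. apply: H. by exists i.
Qed.

Lemma sat_coinc {L} {M : structure L} (phi : formula L) : forall (a b : nat -> M),
  (forall w, free w phi -> a w = b w) -> (sat a phi <-> sat b phi).
Proof.
elim: phi => [|t s|r ts|p IH|p IHp q IHq|p IHp q IHq|p IHp q IHq|v p IH|v p IH] a b H /=.
- tauto.
- rewrite (eval_coinc (b:=b) (t:=t)) ?(eval_coinc (b:=b) (t:=s)) //; move=> w Hw; apply H; simpl; tauto.
- have -> : (fun i => eval a (ts i)) = (fun i => eval b (ts i)); last tauto.
  apply functional_extensionality => i; apply eval_coinc => w Hw; apply H; by exists i.
- by rewrite (IH a b).
- have := IHp a b (fun w Hw => H w (or_introl Hw)); have := IHq a b (fun w Hw => H w (or_intror Hw)); tauto.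
- have := IHp a b (fun w Hw => H w (or_introl Hw)); have := IHq a b (fun w Hw => H w (or_intror Hw)); tauto.
- have := IHp a b (fun w Hw => H w (or_introl Hw)); have := IHq a b (fun w Hw => H w (or_intror Hw)); tauto.
- have E : forall x w, free w p -> upd a v x w = upd b v x w.
    move=> x w Hw; rewrite /upd; case: eqP => // Hne; apply: H; by split.
  split=> Hs x.
  + apply/(IH _ _ (E x)); exact: Hs.
  + apply/(IH _ _ (E x)); exact: Hs.
- have E : forall x w, free w p -> upd a v x w = upd b v x w.
    move=> x w Hw; rewrite /upd; case: eqP => // Hne; apply: H; by split.
  split=> -[x Hx]; exists x.
  + apply/(IH _ _ (E x)); exact: Hx.
  + apply/(IH _ _ (E x)); exact: Hx.
Qed.

Definition fAndL {L} (l : list (formula L)) := fold_right (@fAnd L) (fNot (fFalse L)) l.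
Definition fOrL {L} (l : list (formula L)) := fold_right (@fOr L) (fFalse L) l.
Definition fIff {L} (p q : formula L) := fAnd (fImp p q) (fImp q p).
Definition fExL {L} (vs : list nat) (p : formula L) := fold_right (@fEx L) p vs.
Definition fAllL {L} (vs : list nat) (p : formula L) := fold_right (@fAll L) p vs.

Lemma sat_AndL {L} {M : structure L} (a : nat -> M) l :
  sat a (fAndL l) <-> forall p, In p l -> sat a p.
Proof.
elim: l => [|q l IH] /=; first by split=> // _ [].
rewrite IH; split; [case=> H1 H2 p [<-|Hp]; auto| move=> H; split; auto].
Qed.

Lemma sat_OrL {L} {M : structure L} (a : nat -> M) l :
  sat a (fOrL l) <-> exists p, In p l /\ sat a p.
Proof.
elim: l => [|q l IH] /=; first by split=> // [[p [[]]]].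
rewrite IH; split.
- case=> [H|[p [Hp H]]]; [exists q|exists p]; auto.
- case=> p [[<-|Hp] H]; auto. right; exists p; auto.
Qed.

Lemma free_AndL {L} w (l : list (formula L)) : free w (fAndL l) -> exists p, In p l /\ free w p.
Proof. elim: l => [|q l IH] //= [H|H]; [exists q; auto|case: (IH H) => p [? ?]; exists p; auto]. Qed.
Lemma free_OrL {L} w (l : list (formula L)) : free w (fOrL l) -> exists p, In p l /\ free w p.
Proof. elim: l => [|q l IH] //= [H|H]; [exists q; auto|case: (IH H) => p [? ?]; exists p; auto]. Qed.
Lemma free_ExL {L} w vs (p : formula L) : free w (fExL vs p) -> ~ In w vs /\ free w p.
Proof. elim: vs => [|v vs IH] /=; first by auto. move=> [H1 /IH [H2 H3]]; split=> // -[]; auto. Qed.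
Lemma free_AllL {L} w vs (p : formula L) : free w (fAllL vs p) -> ~ In w vs /\ free w p.
Proof. elim: vs => [|v vs IH] /=; first by auto. move=> [H1 /IH [H2 H3]]; split=> // -[]; auto. Qed.

Definition ovr {T} (a u : nat -> T) s n : nat -> T :=
  fun x => if (s <= x) && (x < s + n) then u x else a x.

Lemma ovr0 {T} (a u : nat -> T) s : ovr a u s 0 = a.
Proof. apply: functional_extensionality => x; rewrite /ovr; case: ifP => //; lia. Qed.

Lemma ovr_upd {L} {M : structure L} (a u : nat -> M) s n x :
  ovr (upd a s x) u s.+1 n = ovr a (fun y => if y == s then x else u y) s n.+1.
Proof.
apply: functional_extensionality => y; rewrite /ovr /upd.
do ![case: ifP => ? //]; try lia.
Qed.

Lemma ovr_upd2 {L} {M : structure L} (a u : nat -> M) s n :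
  ovr a u s n.+1 = ovr (upd a s (u s)) u s.+1 n.
Proof.
apply: functional_extensionality => y; rewrite /ovr /upd.
do ![case: ifP => ? //]; try lia.
match goal with H : is_true (_ == _) |- _ => by move/eqP: H => -> end.
Qed.

Lemma sat_ExL {L} {M : structure L} n : forall s (a : nat -> M) (p : formula L),
  sat a (fExL (List.seq s n) p) <-> exists u, sat (ovr a u s n) p.
Proof.
rewrite /fExL /fAllL; elim: n => [|n IH] s a p /=.
- split; [move=> H; exists a; by rewrite ovr0| case=> u; by rewrite ovr0].
- split.
  + case=> x Hx; have [u Hu] := (IH _ _ _).1 Hx; exists (fun y => if y == s then x else u y); by rewrite -ovr_upd.
  + case=> u; rewrite ovr_upd2 => H; exists (u s); apply: (IH _ _ _).2; by exists u.
Qed.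

Lemma sat_AllL {L} {M : structure L} n : forall s (a : nat -> M) (p : formula L),
  sat a (fAllL (List.seq s n) p) <-> forall u, sat (ovr a u s n) p.
Proof.
rewrite /fExL /fAllL; elim: n => [|n IH] s a p /=.
- split; [move=> H u; by rewrite ovr0| move=> H; have := H a; by rewrite ovr0].
- split.
  + move=> H u; rewrite ovr_upd2; apply: (IH _ _ _).1; exact: H.
  + move=> H x; apply: (IH _ _ _).2 => u; rewrite ovr_upd; exact: H.
Qed.

Definition injb {T} n (f : nat -> T) := forall i j, i < n -> j < n -> f i = f j -> i = j.
Definition into {T} n (f : nat -> T) (S : list T) := forall i, i < n -> In (f i) S.
Definition img {T} (f : nat -> T) n := List.map f (List.seq 0 n).
Definition glue {T} n (f g : nat -> T) := fun i => if i < n then f i else g (i - n).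

Lemma in_img {T} (f : nat -> T) n x : In x (img f n) <-> exists i, i < n /\ f i = x.
Proof.
rewrite /img in_map_iff; split=> -[i [H1 H2]]; exists i; split=> //.
- move/in_seq: H2; lia.
- apply/in_seq; lia.
Qed.

Lemma img_len {T} (f : nat -> T) n : length (img f n) = n.
Proof. by rewrite /img length_map length_seq. Qed.

Lemma img_NoDup {T} (f : nat -> T) n : injb n f -> NoDup (img f n).
Proof.
move=> H; apply: NoDup_map_NoDup_ForallPairs; last exact: seq_NoDup.
move=> i j /in_seq Hi /in_seq Hj E; apply: H => //; lia.
Qed.

Lemma into_img {T} (f : nat -> T) n : into n f (img f n).
Proof. move=> i Hi; apply/in_img; by exists i. Qed.

Lemma img_nth {T} (f : nat -> T) (l : list T) d :
  (forall i, i < length l -> f i = List.nth i l d) -> img f (length l) = l.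
Proof.
move=> H; apply: (nth_ext _ _ d d); first by rewrite img_len.
move=> i; rewrite img_len => Hi.
rewrite /img (nth_indep _ _ (f 0)); last by rewrite length_map length_seq.
rewrite map_nth seq_nth //; apply: H; lia.
Qed.

Lemma pick {T} (d : T) n : forall (S forb : list T), NoDup S -> (length forb + n <= length S)%N ->
  exists z, injb n z /\ into n z S /\ forall i, i < n -> ~ In (z i) forb.
Proof.
elim: n => [|n IH] S forb HS Hl.
- exists (fun _ => d); split; [move=> i j; lia|split; move=> i; lia].
- have [s [Hs1 Hs2]] : exists s, In s S /\ ~ In s forb.
    apply: NNPP => Hn.
    have Hi : incl S forb.
      move=> x Hx; apply: NNPP => Hx'; apply: Hn; by exists x.
    have := NoDup_incl_length HS Hi; lia.
  have [z [Hz1 [Hz2 Hz3]]] := IH S (s :: forb) HS (ltac:(simpl; lia)).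
  exists (fun i => if i < n then z i else s); split; [|split].
  + move=> i j Hi Hj; case: ifP => Hi'; case: ifP => Hj'.
    * by apply: Hz1.
    * move=> E; exfalso; apply: (Hz3 i Hi'); rewrite E; by left.
    * move=> E; exfalso; apply: (Hz3 j Hj'); rewrite -E; by left.
    * lia.
  + move=> i Hi; case: ifP => Hi'; [exact: Hz2|done].
  + move=> i Hi; case: ifP => Hi'.
    * move=> H; apply: (Hz3 i Hi'); by right.
    * done.
Qed.

Lemma glue_lo {T} n (f g : nat -> T) i : i < n -> glue n f g i = f i.
Proof. by rewrite /glue => ->. Qed.
Lemma glue_hi {T} n (f g : nat -> T) j : glue n f g (n + j) = g j.
Proof. rewrite /glue ifF; last lia. f_equal; lia. Qed.

Lemma glue_inj {T} n m (f g : nat -> T) : injb n f -> injb m g ->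
  (forall i j, i < n -> j < m -> f i <> g j) -> injb (n + m) (glue n f g).
Proof.
move=> Hf Hg Hfg i j Hi Hj; rewrite /glue; case: ifP => Hi'; case: ifP => Hj'.
- exact: Hf.
- move=> E; exfalso; apply: (Hfg i (j - n)) => //; lia.
- move=> E; exfalso; apply: (Hfg j (i - n)) => //; lia.
- move=> E; have := Hg _ _ _ _ E; lia.
Qed.

Lemma glue_into {T} n m (f g : nat -> T) S : into n f S -> into m g S -> into (n + m) (glue n f g) S.
Proof. move=> Hf Hg i Hi; rewrite /glue; case: ifP => Hi'; [exact: Hf|apply: Hg; lia]. Qed.

Definition hom {L} {M : structure L} (phi : formula L) n (S : list M) :=
  forall f g : nat -> M, into n f S -> into n g S -> injb n f -> injb n g -> (sat f phi <-> sat g phi).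

Lemma fvb_coinc {L} {M : structure L} n (phi : formula L) (f g : nat -> M) :
  fv_below n phi -> (forall i, i < n -> f i = g i) -> (sat f phi <-> sat g phi).
Proof. move=> Hfv H; apply: sat_coinc => w Hw; apply: H; exact: Hfv. Qed.

Lemma fvb_mono {L} n m (phi : formula L) : fv_below n phi -> n <= m -> fv_below m phi.
Proof. move=> H Hnm w Hw; have := H w Hw; lia. Qed.

Lemma hom_incl {L} {M : structure L} (phi : formula L) n (S S' : list M) :
  incl S' S -> hom phi n S -> hom phi n S'.
Proof.
move=> Hi H f g Hf Hg; apply: H => i Hi'; apply: Hi; [exact: Hf|exact: Hg].
Qed.

Definition ren {L} (p : formula L) n B :=
  fExL (List.seq 0 n) (fAnd (fAndL (List.map (fun j => fEq (tvar L j) (tvar L (B + j))) (List.seq 0 n))) p).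

Lemma sat_ren {L} {M : structure L} (a : nat -> M) p n B :
  fv_below n p -> n <= B -> (sat a (ren p n B) <-> sat (fun j => a (B + j)) p).
Proof.
move=> Hfv HB; rewrite /ren sat_ExL; split.
- case=> u /= [/sat_AndL Heq Hp].
  have E : forall i, i < n -> ovr a u 0 n i = a (B + i).
    move=> i Hi; have := Heq (fEq (tvar L i) (tvar L (B + i))).
    rewrite in_map_iff /= => H; rewrite H; last by exists i; split => //; apply/in_seq; lia.
    rewrite /ovr ifF //; lia.
  by apply/(fvb_coinc Hfv E).
- move=> Hp; exists (fun j => a (B + j)) => /=; split.
  + apply/sat_AndL => q /in_map_iff [j [<- /in_seq Hj]] /=.
    rewrite /ovr ifT; last lia. rewrite ifF //; lia.
  + apply: (proj1 (fvb_coinc Hfv _) Hp) => i Hi; rewrite /ovr ifT //; lia.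
Qed.

Lemma free_ren {L} (p : formula L) n B w :
  fv_below n p -> free w (ren p n B) -> B <= w < B + n.
Proof.
move=> Hfv /free_ExL [Hw [/free_AndL [q [/in_map_iff [j [<- /in_seq Hj]]] /= [E|E]] | /Hfv Hw']].
- exfalso; apply: Hw; apply/in_seq; lia.
- lia.
- exfalso; apply: Hw; apply/in_seq; lia.
Qed.

Definition fIffS := 0.

Definition combF {L} (phi psi : formula L) n N := fIff phi (ren psi N (n + N)).

Lemma fv_comb {L} (phi psi : formula L) n N :
  fv_below n phi -> fv_below N psi -> fv_below (n + N + N) (combF phi psi n N).
Proof.
move=> H1 H2 w; rewrite /combF /fIff /=.
have F : free w (ren psi N (n + N)) -> w < n + N + N by move/(free_ren H2); lia.
have G : free w phi -> w < n + N + N by move/H1; lia.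
tauto.
Qed.

Lemma sat_comb {L} {M : structure L} (f : nat -> M) (phi psi : formula L) n N :
  fv_below N psi ->
  (sat f (combF phi psi n N) <-> (sat f phi <-> sat (fun j => f (n + N + j)) psi)).
Proof.
move=> H2; rewrite /combF /fIff /= (sat_ren _ H2); last lia. tauto.
Qed.

Lemma iff_cancel (P Q X : Prop) : ((P <-> X) <-> (Q <-> X)) -> (P <-> Q).
Proof. case: (classic X); tauto. Qed.

Lemma comb_step {L} {M : structure L} (S : list M) (phi psi : formula L) n N :
  fv_below n phi -> fv_below N psi -> NoDup S -> 2 * (n + N + N) <= length S ->
  hom (combF phi psi n N) (n + N + N) S -> hom phi n S /\ hom psi N S.
Proof.
move=> H1 H2 HS Hl Hh; split.
- move=> f g Hf Hg If Ig.
  have [z [Iz [Tz Dz]]] := @pick _ (dom_inh M) (N + N) S (img f n ++ img g n) HS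
    (ltac:(rewrite length_app !img_len; lia)).
  have Df : forall i j, i < n -> j < N + N -> f i <> z j.
    move=> i j Hi Hj E; apply: (Dz j Hj); rewrite -E; apply: in_or_app; left; apply/in_img; by exists i.
  have Dg : forall i j, i < n -> j < N + N -> g i <> z j.
    move=> i j Hi Hj E; apply: (Dz j Hj); rewrite -E; apply: in_or_app; right; apply/in_img; by exists i.
  have := Hh (glue n f z) (glue n g z).
  rewrite -addnA; move=> /(_ (glue_into Hf Tz) (glue_into Hg Tz) (glue_inj If Iz Df) (glue_inj Ig Iz Dg)).
  rewrite !sat_comb //.
  have -> : (fun j => glue n f z (n + N + j)) = (fun j => glue n g z (n + N + j)).
    apply: functional_extensionality => j; by rewrite -addnA !glue_hi.
  rewrite (fvb_coinc (g := f) H1); last by move=> i Hi; rewrite glue_lo.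
  rewrite (fvb_coinc (f := glue n g z) (g := g) H1); last by move=> i Hi; rewrite glue_lo.
  exact: iff_cancel.
- move=> f g Hf Hg If Ig.
  have [z [Iz [Tz Dz]]] := @pick _ (dom_inh M) (n + N) S (img f N ++ img g N) HS
    (ltac:(rewrite length_app !img_len; lia)).
  have Df : forall i j, i < n + N -> j < N -> z i <> f j.
    move=> i j Hi Hj E; apply: (Dz i Hi); rewrite E; apply: in_or_app; left; apply/in_img; by exists j.
  have Dg : forall i j, i < n + N -> j < N -> z i <> g j.
    move=> i j Hi Hj E; apply: (Dz i Hi); rewrite E; apply: in_or_app; right; apply/in_img; by exists j.
  have := Hh (glue (n + N) z f) (glue (n + N) z g).
  move=> /(_ (glue_into Tz Hf) (glue_into Tz Hg) (glue_inj Iz If Df) (glue_inj Iz Ig Dg)).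
  rewrite !sat_comb //.
  have -> : (fun j => glue (n + N) z f (n + N + j)) = f.
    apply: functional_extensionality => j; by rewrite glue_hi.
  have -> : (fun j => glue (n + N) z g (n + N + j)) = g.
    apply: functional_extensionality => j; by rewrite glue_hi.
  rewrite (fvb_coinc (f := glue (n + N) z f) (g := z) H1); last by move=> i Hi; rewrite glue_lo //; lia.
  rewrite (fvb_coinc (f := glue (n + N) z g) (g := z) H1); last by move=> i Hi; rewrite glue_lo //; lia.
  move=> H; split=> [Hf'|Hg']; [case: (classic (sat z phi)) => Hz|case: (classic (sat z phi)) => Hz]; tauto.
Qed.

Lemma hom_down {L} {M : structure L} (S : list M) (phi : formula L) n m :
  NoDup S -> fv_below n phi -> n <= m -> m <= length S -> hom phi m S -> hom phi n S.
Proof.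
move=> HS Hfv Hnm HmS Hh f g Hf Hg If Ig.
have [z1 [Iz1 [Tz1 Dz1]]] := @pick _ (dom_inh M) (m - n) S (img f n) HS (ltac:(rewrite img_len; lia)).
have [z2 [Iz2 [Tz2 Dz2]]] := @pick _ (dom_inh M) (m - n) S (img g n) HS (ltac:(rewrite img_len; lia)).
have Df : forall i j, i < n -> j < m - n -> f i <> z1 j.
  move=> i j Hi Hj E; apply: (Dz1 j Hj); rewrite -E; apply/in_img; by exists i.
have Dg : forall i j, i < n -> j < m - n -> g i <> z2 j.
  move=> i j Hi Hj E; apply: (Dz2 j Hj); rewrite -E; apply/in_img; by exists i.
have E : n + (m - n) = m by lia.
have := Hh (glue n f z1) (glue n g z2).
rewrite -{1 2 3 4}E => /(_ (glue_into Hf Tz1) (glue_into Hg Tz2) (glue_inj If Iz1 Df) (glue_inj Ig Iz2 Dg)).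
rewrite (fvb_coinc (f := glue n f z1) (g := f) Hfv); last by move=> i Hi; rewrite glue_lo.
rewrite (fvb_coinc (f := glue n g z2) (g := g) Hfv) //; last by move=> i Hi; rewrite glue_lo.
Qed.

Definition wfD {L} (D : list (formula L * nat)) := forall p, In p D -> fv_below p.2 p.1.

Lemma combD {L} {M : structure L} (D : list (formula L * nat)) : wfD D ->
  exists psi N, fv_below N psi /\ forall S : list M, NoDup S -> 2 * N <= length S ->
    hom psi N S -> forall p, In p D -> hom p.1 p.2 S.
Proof.
elim: D => [|[phi n] D IH] HD.
- exists (fFalse L), 0; split; first by move=> w.
  by move=> S _ _ _ p [].
- have HD' : wfD D by move=> p Hp; apply: HD; right.
  have Hphi : fv_below n phi by apply: (HD (phi, n)); left.
  have [psi [N [Hpsi HS]]] := IH HD'.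
  exists (combF phi psi n N), (n + N + N); split; first exact: fv_comb.
  move=> S HnS Hl Hh.
  have [Hh1 Hh2] := comb_step Hphi Hpsi HnS Hl Hh.
  move=> p [<-|Hp] //; apply: (HS S) => //; lia.
Qed.

Definition hypH {L} (C : structure L) := forall n (phi : formula L), fv_below n phi ->
  exists a : 'I_n -> C, injective a /\ forall pi1 pi2 : {perm 'I_n},
    sat (tassign (fun i => a (pi1 i))) phi -> sat (tassign (fun i => a (pi2 i))) phi.

Lemma tassign_val {L} {M : structure L} n (c : 'I_n -> M) (i : 'I_n) : tassign c (val i) = c i.
Proof. by rewrite /tassign valK. Qed.

Lemma tassign_lt {L} {M : structure L} n (c : 'I_n -> M) k (Hk : k < n) : tassign c k = c (Ordinal Hk).
Proof. by rewrite -(tassign_val c (Ordinal Hk)). Qed.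

Lemma perm_of {L} {M : structure L} m (a : 'I_m -> M) (f : nat -> M) :
  into m f (img (tassign a) m) -> injb m f ->
  exists pi : {perm 'I_m}, forall k, k < m -> tassign (fun i => a (pi i)) k = f k.
Proof.
move=> Hf If.
have E : forall i : 'I_m, exists j : 'I_m, a j = f i.
  move=> i; have /in_img [k [Hk Ek]] := Hf i (ltn_ord i).
  exists (Ordinal Hk); by rewrite -(tassign_lt a Hk).
pose h i := proj1_sig (constructive_indefinite_description _ (E i)).
have Hh : forall i, a (h i) = f i by move=> i; rewrite /h; case: constructive_indefinite_description.
have hinj : injective h.
  move=> i i' Ei; apply: val_inj; apply: If; [exact: ltn_ord|exact: ltn_ord|by rewrite -!Hh Ei].
exists (perm hinj) => k Hk; rewrite (tassign_lt _ Hk) permE Hh //.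
Qed.

Lemma hyp_hom {L} {M : structure L} m (psi : formula L) : hypH M -> fv_below m psi ->
  exists S : list M, NoDup S /\ length S = m /\ hom psi m S.
Proof.
move=> H Hpsi; have [a [Ia Ha]] := H m psi Hpsi.
exists (img (tassign a) m); split; [|split; first exact: img_len].
- apply: img_NoDup => i j Hi Hj; rewrite (tassign_lt _ Hi) (tassign_lt _ Hj) => /Ia E.
  by have := congr1 val E.
- move=> f g Hf Hg If Ig.
  have [pf Hpf] := perm_of Hf If; have [pg Hpg] := perm_of Hg Ig.
  rewrite -(fvb_coinc (f := tassign (fun i => a (pf i))) (g := f) Hpsi Hpf).
  rewrite -(fvb_coinc (f := tassign (fun i => a (pg i))) (g := g) Hpsi Hpg).
  split; exact: Ha.
Qed.

Definition Inv {L} {M : structure L} (A : list M) := NoDup A /\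
  forall (D : list (formula L * nat)) m, wfD D -> exists B, length B = m /\
    NoDup (A ++ B)%list /\ forall p, In p D -> hom p.1 p.2 (A ++ B)%list.

Lemma firstn_sub {T} k (l : list T) : NoDup l -> NoDup (firstn k l) /\ incl (firstn k l) l.
Proof.
move=> H; have E := firstn_skipn k l; split.
- apply: (NoDup_app_remove_r _ (skipn k l)); by rewrite E.
- move=> x Hx; rewrite -E; apply: in_or_app; by left.
Qed.

Lemma Inv0 {L} {M : structure L} : hypH M -> @Inv L M [::].
Proof.
move=> H; split; first exact: NoDup_nil.
move=> D m HD; have [psi [N [Hpsi HS]]] := combD (M := M) HD.
have Hmo : fv_below (maxn (2 * N) m) psi by apply: fvb_mono Hpsi _; lia.
have [S [HnS [Hl Hh]]] := @hyp_hom L M (maxn (2 * N) m) psi H Hmo.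
have Hh' : hom psi N S by apply: (hom_down HnS Hpsi _ _ Hh); lia.
have HD' := HS S HnS (ltac:(rewrite Hl; lia)) Hh'.
have [F1 F2] := firstn_sub m HnS.
exists (firstn m S); split; [|split] => //=.
- rewrite length_firstn; lia.
- move=> p Hp; apply: hom_incl F2 _; exact: HD'.
Qed.

Definition distF {L} s n : formula L :=
  fAndL (List.flat_map (fun l => List.map (fun l' => if l == l' then fNot (fFalse L)
          else fNot (fEq (tvar L (s + l)) (tvar L (s + l')))) (List.seq 0 n)) (List.seq 0 n)).

Lemma sat_dist {L} {M : structure L} (a : nat -> M) s n :
  sat a (distF s n) <-> injb n (fun l => a (s + l)).
Proof.
rewrite /distF sat_AndL; split.
- move=> H i j Hi Hj E; apply: NNPP => Hne.
  have Hq : In (fNot (fEq (tvar L (s + i)) (tvar L (s + j))))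
    (List.flat_map (fun l => List.map (fun l' => if l == l' then fNot (fFalse L)
          else fNot (fEq (tvar L (s + l)) (tvar L (s + l')))) (List.seq 0 n)) (List.seq 0 n)).
    apply/in_flat_map; exists i; split; first by apply/in_seq; lia.
    apply/in_map_iff; exists j; split; last by apply/in_seq; lia.
    by rewrite ifF //; apply/eqP.
  exact: (H _ Hq).
- move=> H q /in_flat_map [i [/in_seq Hi /in_map_iff [j [<- /in_seq Hj]]]].
  case: eqP => Hij /=; first by move=> [].
  move=> E; apply: Hij; apply: H => //; lia.
Qed.

Definition memF {L} n s N : formula L :=
  fAndL (List.map (fun j => fOrL (List.map (fun l => fEq (tvar L j) (tvar L (s + l))) (List.seq 0 N))) (List.seq 0 n)).

Lemma sat_mem {L} {M : structure L} (a : nat -> M) n s N :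
  sat a (memF n s N) <-> into n a (img (fun l => a (s + l)) N).
Proof.
rewrite /memF sat_AndL; split.
- move=> H i Hi.
  have Hq := H (fOrL (List.map (fun l => fEq (tvar L i) (tvar L (s + l))) (List.seq 0 N))).
  have [q [/in_map_iff [l [<- /in_seq Hl]] /= E]] :
    exists q, In q (List.map (fun l => fEq (tvar L i) (tvar L (s + l))) (List.seq 0 N)) /\ sat a q.
    apply/sat_OrL; apply: Hq; apply/in_map_iff; exists i; split => //; apply/in_seq; lia.
  apply/in_img; exists l; split => //; lia.
- move=> H q /in_map_iff [j [<- /in_seq Hj]]; apply/sat_OrL.
  have /in_img [l [Hl E]] := H j (ltac:(lia)).
  exists (fEq (tvar L j) (tvar L (s + l))); split => //=.
  apply/in_map_iff; exists l; split => //; apply/in_seq; lia.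
Qed.

Definition HomF {L} (phi : formula L) n s N : formula L :=
  fOr (fAllL (List.seq 0 n) (fImp (fAnd (memF n s N) (distF 0 n)) phi))
      (fAllL (List.seq 0 n) (fImp (fAnd (memF n s N) (distF 0 n)) (fNot phi))).

Lemma img_ext {T} (f g : nat -> T) N : (forall l, l < N -> f l = g l) -> img f N = img g N.
Proof. move=> H; apply: map_ext_in => l /in_seq Hl; apply: H; lia. Qed.

Lemma cond_sem {L} {M : structure L} (a u : nat -> M) n s N : n <= s ->
  (sat (ovr a u 0 n) (memF n s N) /\ sat (ovr a u 0 n) (distF 0 n)) <->
  into n u (img (fun l => a (s + l)) N) /\ injb n u.
Proof.
move=> Hs; rewrite sat_mem sat_dist.
have -> : (fun l => ovr a u 0 n (s + l)) = (fun l => a (s + l)).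
  apply: functional_extensionality => l; rewrite /ovr ifF //; lia.
have E : forall i, i < n -> ovr a u 0 n i = u i by move=> i Hi; rewrite /ovr ifT //; lia.
split=> -[H1 H2]; split.
- by move=> i Hi; rewrite -E //; apply: H1.
- by move=> i j Hi Hj; rewrite -!E //; apply: H2.
- by move=> i Hi; rewrite E //; apply: H1.
- by move=> i j Hi Hj /=; rewrite !E //; apply: H2.
Qed.

Lemma sat_HomF {L} {M : structure L} (a : nat -> M) (phi : formula L) n s N :
  fv_below n phi -> n <= s ->
  (sat a (HomF phi n s N) <-> hom phi n (img (fun l => a (s + l)) N)).
Proof.
move=> Hfv Hs; rewrite /HomF /= !sat_AllL.
have Ephi : forall u, sat (ovr a u 0 n) phi <-> sat u phi.
  move=> u; apply: (fvb_coinc Hfv) => i Hi; rewrite /ovr ifT //; lia.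
set S := img (fun l => a (s + l)) N.
have C : forall u, (sat (ovr a u 0 n) (memF n s N) /\ sat (ovr a u 0 n) (distF 0 n)) <-> into n u S /\ injb n u.
  move=> u; exact: cond_sem.
split.
- move=> [H|H] f g Hf Hg If Ig.
  + have := H f; have := H g; rewrite /= !C !Ephi; tauto.
  + have := H f; have := H g; rewrite /= !C !Ephi; tauto.
- move=> Hh; case: (classic (exists u, into n u S /\ injb n u /\ sat u phi)).
  + case=> u0 [H1 [H2 H3]]; left => u /=; rewrite C Ephi => -[H4 H5].
    by apply/(Hh _ _ H4 H1 H5 H2).
  + move=> Hn; right => u /=; rewrite C Ephi => -[H4 H5] H6; apply: Hn; by exists u.
Qed.

Definition maxD {L} (D : list (formula L * nat)) := List.fold_right (fun p acc => maxn p.2 acc) 0 D.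

Lemma maxD_ge {L} (D : list (formula L * nat)) p : In p D -> p.2 <= maxD D.
Proof. elim: D => [|q D IH] //= [->|/IH]; lia. Qed.

Definition chi {L} k (D : list (formula L * nat)) m : formula L :=
  fExL (List.seq (maxn k.+1 (maxD D)) (k.+1 + m))
   (fAnd (fAndL (List.map (fun i => fEq (tvar L (maxn k.+1 (maxD D) + i)) (tvar L i)) (List.seq 0 k.+1)))
    (fAnd (distF (maxn k.+1 (maxD D)) (k.+1 + m))
       (fAndL (List.map (fun p => HomF p.1 p.2 (maxn k.+1 (maxD D)) (k.+1 + m)) D)))).

Lemma injb_ext {T} (f g : nat -> T) N : (forall l, l < N -> f l = g l) -> injb N f -> injb N g.
Proof. move=> E H i j Hi Hj; rewrite -!E //; exact: H. Qed.

Lemma sat_chi {L} {M : structure L} (A : list M) (b : M) (D : list (formula L * nat)) m :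
  wfD D ->
  (sat (upd (fun i => List.nth i A (dom_inh M)) (length A) b) (chi (length A) D m) <->
   exists B, length B = m /\ NoDup (A ++ b :: B)%list /\ forall p, In p D -> hom p.1 p.2 (A ++ b :: B)%list).
Proof.
move=> HD; set k := length A; set d := dom_inh M.
set base := maxn k.+1 (maxD D); set N := k.+1 + m.
set a := upd (fun i => List.nth i A d) k b.
have Ha : forall B i, i <= k -> a i = List.nth i (A ++ b :: B)%list d.
  move=> B i Hi; rewrite /a /upd; case: eqP => [->|Hne].
  - rewrite app_nth2; last by rewrite /k; lia.
    by have -> : (k - length A)%coq_nat = 0 by rewrite /k; lia.
  - rewrite app_nth1 //; rewrite /k in Hi Hne *; lia.
have HlenB : forall B, length B = m -> length (A ++ b :: B)%list = N.
  move=> B HB; rewrite length_app /= HB /N /k; lia.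
have Hfv : forall p, In p D -> fv_below p.2 p.1 /\ p.2 <= base.
  move=> p Hp; split; [exact: HD|]; have := maxD_ge Hp; rewrite /base; lia.
rewrite /chi -/base -/N sat_ExL; split.
- case=> u H.
  have [H1 [H2 H3]] : sat (ovr a u base N) (fAndL (List.map (fun i => fEq (tvar L (base + i)) (tvar L i)) (List.seq 0 k.+1)))
    /\ (sat (ovr a u base N) (distF base N) /\
      sat (ovr a u base N) (fAndL (List.map (fun p => HomF p.1 p.2 base N) D))) := H.
  have Heq := proj1 (sat_AndL _ _) H1; have Hdist := proj1 (sat_dist _ _ _) H2.
  have Hhom := proj1 (sat_AndL _ _) H3.
  set w := fun l => u (base + l).
  have Ew : forall l, l < N -> ovr a u base N (base + l) = w l.
    move=> l Hl; rewrite /ovr ifT //; lia.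
  have Ew' : forall i, i < base -> ovr a u base N i = a i.
    move=> i Hi; rewrite /ovr ifF //; lia.
  have Hw1 : forall i, i <= k -> w i = a i.
    move=> i Hi; rewrite -Ew; last by rewrite /N; lia.
    rewrite -(Ew' i); last by rewrite /base; lia.
    apply: (Heq (fEq (tvar L (base + i)) (tvar L i))); apply/in_map_iff; exists i; split => //.
    apply/in_seq; lia.
  set B := List.map w (List.seq k.+1 m).
  have Eimg : img w N = (A ++ b :: B)%list.
    rewrite /img; have -> : List.seq 0 N = (List.seq 0 k.+1 ++ List.seq k.+1 m)%list by exact: (seq_app k.+1 m 0).
    rewrite map_app.
    have E1 : img w k.+1 = (A ++ [:: b])%list.
      have E := @img_nth _ w (A ++ [:: b])%list d.
      have Hl : length (A ++ [:: b])%list = k.+1 by rewrite length_app /= /k; lia.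
      rewrite Hl in E; apply: E => i Hi.
      rewrite Hw1; last lia. exact: Ha.
    change (List.map w (List.seq 0 k.+1)) with (img w k.+1); rewrite E1.
    by rewrite -app_assoc.
  exists B; split; [by rewrite /B length_map length_seq|split].
  + rewrite -Eimg; apply: img_NoDup; apply: injb_ext Hdist => l Hl; exact: Ew.
  + move=> p Hp; rewrite -Eimg.
    have [Hf1 Hf2] := Hfv p Hp.
    have := Hhom (HomF p.1 p.2 base N); rewrite (@sat_HomF L M _ _ _ _ _ Hf1 Hf2) => Hx.
    rewrite -(img_ext Ew); apply: Hx; apply/in_map_iff; by exists p.
- case=> B [HB [HnD Hh]].
  set w := fun l => List.nth l (A ++ b :: B)%list d.
  have Eimg : img w N = (A ++ b :: B)%list by rewrite -(HlenB B HB); apply: img_nth.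
  exists (fun x => w (x - base)).
  pose a' := ovr a (fun x => w (x - base)) base N.
  have Ew : forall l, l < N -> ovr a (fun x => w (x - base)) base N (base + l) = w l.
    move=> l Hl; rewrite /ovr ifT; last lia. f_equal; lia.
  have Ew' : forall i, i < base -> ovr a (fun x => w (x - base)) base N i = a i.
    move=> i Hi; rewrite /ovr ifF //; lia.
  have G1 : sat a' (fAndL (List.map (fun i => fEq (tvar L (base + i)) (tvar L i)) (List.seq 0 k.+1))).
    apply/sat_AndL => q /in_map_iff [i [<- /in_seq Hi]] /=.
    rewrite /a' Ew; last by rewrite /N; lia.
    rewrite Ew'; last by rewrite /base; lia.
    rewrite /w -Ha //; lia.
  have G2 : sat a' (distF base N).
    apply/sat_dist; apply: (injb_ext (f := w)) => [l Hl|]; first by rewrite /a' Ew.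
    move=> i j Hi Hj; have := (proj1 (NoDup_nth (A ++ b :: B)%list d) HnD i j).
    rewrite (HlenB B HB) => H E; apply: H => //; lia.
  have G3 : sat a' (fAndL (List.map (fun p => HomF p.1 p.2 base N) D)).
    apply/sat_AndL => q /in_map_iff [p [<- Hp]].
    have [Hf1 Hf2] := Hfv p Hp.
    rewrite (@sat_HomF L M _ _ _ _ _ Hf1 Hf2) /a' (img_ext Ew) Eimg; exact: Hh.
  exact: (conj G1 (conj G2 G3)).
Qed.

Lemma free_mem {L} w n s N : free w (@memF L n s N) -> w < n \/ (s <= w < s + N).
Proof.
rewrite /memF => /free_AndL [q [/in_map_iff [j [<- /in_seq Hj]]]].
move=> /free_OrL [q' [/in_map_iff [l [<- /in_seq Hl]]]] /= [->|->]; lia.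
Qed.

Lemma free_dist {L} w s n : free w (@distF L s n) -> s <= w < s + n.
Proof.
rewrite /distF => /free_AndL [q [/in_flat_map [i [/in_seq Hi /in_map_iff [j [<- /in_seq Hj]]]]]].
case: eqP => _ /=; first done.
case=> ->; lia.
Qed.

Lemma free_HomF {L} (phi : formula L) n s N w :
  fv_below n phi -> n <= s -> free w (HomF phi n s N) -> s <= w < s + N.
Proof.
move=> Hfv Hs; rewrite /HomF /=.
have K : ~ In w (List.seq 0 n) -> free w (fImp (fAnd (memF n s N) (distF 0 n)) phi) \/
      free w (fImp (fAnd (memF n s N) (distF 0 n)) (fNot phi)) -> s <= w < s + N.
  move=> Hw; have Hwn : n <= w by apply: NNPP => H; apply: Hw; apply/in_seq; lia.
  move=> H; have : (free w (@memF L n s N) \/ free w (@distF L 0 n)) \/ free w phi by case: H => H; [exact H|exact H].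
  case=> [[/free_mem|/free_dist]|/Hfv]; lia.
case=> /free_AllL [Hw Hf]; apply: K => //; tauto.
Qed.

Lemma free_chi {L} k (D : list (formula L * nat)) m w : wfD D -> free w (chi k D m) -> w <= k.
Proof.
move=> HD; rewrite /chi => /free_ExL [Hw]; set base := maxn k.+1 (maxD D).
have Hout : ~ (base <= w < base + (k.+1 + m)) by move=> H; apply: Hw; apply/in_seq; lia.
move=> Hf.
have [He|[Hd|Hh]] : free w (fAndL (List.map (fun i => fEq (tvar L (base + i)) (tvar L i)) (List.seq 0 k.+1)))
  \/ free w (@distF L base (k.+1 + m)) \/ free w (fAndL (List.map (fun p => HomF p.1 p.2 base (k.+1 + m)) D)) := Hf.
- move: He => /free_AndL [q [/in_map_iff [i [<- /in_seq Hi]]]] /= [E|E].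
  + exfalso; apply: Hout; rewrite E; lia.
  + lia.
- move/free_dist: Hd => H; by exfalso.
- move: Hh => /free_AndL [q [/in_map_iff [p [<- Hp]]] H].
  exfalso; apply: Hout; apply: (free_HomF (HD p Hp)) H.
  have := maxD_ge Hp; rewrite /base; lia.
Qed.
Lemma collect {L} k (l : list (formula L)) :
  (forall phi, In phi l -> exists D m, wfD D /\ phi = chi k D m) ->
  exists D m, wfD D /\ forall phi, In phi l -> exists D' m', wfD D' /\ incl D' D /\ m' <= m /\ phi = chi k D' m'.
Proof.
elim: l => [|q l IH] H.
- exists [::], 0; split; first by move=> p [].
  by move=> phi [].
- have [D [m [HD HDl]]] := IH (fun phi Hp => H phi (or_intror Hp)).
  have [D1 [m1 [HD1 E1]]] := H q (or_introl erefl).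
  exists (D1 ++ D)%list, (maxn m1 m); split.
  + move=> p Hp; case: (in_app_or _ _ _ Hp) => Hp'; [exact: HD1|exact: HD].
  + move=> phi [<-|Hp].
    * exists D1, m1; split => //; split; [exact: incl_appl (incl_refl _)|split => //; lia].
    * have [D' [m' [H1 [H2 [H3 H4]]]]] := HDl phi Hp.
      exists D', m'; split => //; split; [exact: incl_appr|split => //; lia].
Qed.

Lemma step {L} {M : structure L} : omega_saturated M -> forall A : list M, Inv A -> exists b, Inv (A ++ [:: b])%list.
Proof.
move=> Hsat A [HnA HA].
pose Sigma := fun phi : formula L => exists D m, wfD D /\ phi = chi (length A) D m.
have := Hsat Sigma (List.seq 0 (length A)) (length A) (fun i => List.nth i A (dom_inh M)).
case.
- move=> phi [D [m [HD ->]]] w /(free_chi HD) Hw.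
  have : w = length A \/ w < length A by lia.
  case=> [->|Hlt]; [by left|right; apply/in_seq; lia].
- move=> l Hl; have [D [m [HD HDl]]] := collect Hl.
  have [B [HB [HnB HhB]]] := HA D m.+1 HD.
  case: B HB HnB HhB => [//|b B'] /= [HB] HnB HhB.
  exists b => phi /HDl [D' [m' [HD' [Hinc [Hm' ->]]]]].
  apply/(sat_chi _ _ _ HD'); exists (firstn m' B'); split.
  + rewrite length_firstn; lia.
  + have E : (A ++ b :: B')%list = ((A ++ b :: firstn m' B') ++ skipn m' B')%list.
      by rewrite -app_assoc -app_comm_cons firstn_skipn.
    split.
    * apply: (NoDup_app_remove_r _ (skipn m' B')); by rewrite -E.
    * move=> p Hp; apply: (hom_incl (S := (A ++ b :: B')%list)).
      - rewrite E; apply: incl_appl; exact: incl_refl.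
      - apply: HhB; exact: Hinc.
- move=> b Hb; exists b; split.
  + have := Hb (chi (length A) [::] 0) (ex_intro _ [::] (ex_intro _ 0 (conj (fun p (H : In p [::]) => match H with end) erefl))).
    case/(sat_chi _ _ _ (fun p (H : In p [::]) => match H with end)) => B [HB [HnD _]].
    case: B HB HnD => [|//] _ HnD; exact HnD.
  + move=> D m HD.
    have := Hb (chi (length A) D m) (ex_intro _ D (ex_intro _ m (conj HD erefl))).
    case/(sat_chi _ _ _ HD) => B [HB [HnD Hh]].
    exists B; rewrite -app_assoc; split => //.
Qed.

Lemma distinct_list {L} {M : structure L} (I : M -> Prop) : ~ finite_set I ->
  forall n, exists l, NoDup l /\ length l = n /\ forall x, In x l -> I x.
Proof.
move=> Hinf; elim=> [|n [l [H1 [H2 H3]]]].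
- exists [::]; split; [exact: NoDup_nil|split=> // x []].
- have [x [Hx Hxl]] : exists x, I x /\ ~ In x l.
    apply: NNPP => Hn; apply: Hinf; exists l => x Hx; apply: NNPP => Hxl; apply: Hn; by exists x.
  exists (x :: l); split; [by constructor|split; [by rewrite /= H2|move=> y [<-|Hy]; auto]].
Qed.

Lemma dir2 {L} {M : structure L} n (phi : formula L) :
  (forall a : 'I_n -> M, injective a -> exists pi1 pi2 : {perm 'I_n},
     sat (tassign (fun i => a (pi1 i))) phi /\ ~ sat (tassign (fun i => a (pi2 i))) phi) ->
  fv_below n phi -> ~ exists I : M -> Prop, ~ finite_set I /\ indiscernible_set I.
Proof.
move=> H Hfv [I [Hinf Hind]].
have [l [Hnd [Hl HI]]] := distinct_list Hinf n.
pose a := fun i : 'I_n => List.nth (val i) l (dom_inh M).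
have Hlt : forall i : 'I_n, (val i < length l)%coq_nat by move=> i; rewrite Hl; apply/ltP; exact: ltn_ord.
have ainj : injective a.
  move=> i j E; apply: val_inj; exact: (proj1 (NoDup_nth l (dom_inh M)) Hnd _ _ (Hlt i) (Hlt j) E).
have aI : forall i, I (a i) by move=> i; apply: HI; apply: nth_In; exact: Hlt.
have [pi1 [pi2 [H1 H2]]] := H a ainj.
apply: H2; apply: (proj1 (Hind n _ _ (inj_comp ainj (@perm_inj _ pi1)) (inj_comp ainj (@perm_inj _ pi2))
   (fun i => aI _) (fun i => aI _) phi Hfv)) H1.
Qed.

Lemma dir1 {L} {M : structure L} : omega_saturated M -> hypH M ->
  exists I : M -> Prop, ~ finite_set I /\ indiscernible_set I.
Proof.
move=> Hsat H.
have ex_step : forall A : list M, exists b, Inv A -> Inv (A ++ [:: b])%list.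
  move=> A; case: (classic (Inv A)) => HA.
  - have [b Hb] := step Hsat HA; by exists b.
  - by exists (dom_inh M).
pose nb := fun A => proj1_sig (constructive_indefinite_description _ (ex_step A)).
have Hnb : forall A, Inv A -> Inv (A ++ [:: nb A])%list.
  move=> A; rewrite /nb; by case: constructive_indefinite_description.
pose As := fix As (k : nat) : list M := match k with 0 => [::] | k'.+1 => (As k' ++ [:: nb (As k')])%list end.
have HInv : forall k, Inv (As k).
  elim=> [|k IH]; [exact: Inv0|exact: Hnb].
have Hlen : forall k, length (As k) = k.
  elim=> [//|k IH] /=; rewrite length_app IH /=; lia.
have Hpre : forall k k', k <= k' -> incl (As k) (As k').
  move=> k; elim=> [|k' IH] Hk.
  - have -> : k = 0 by lia. exact: incl_refl.
  - case: (ltngtP k k'.+1) => [Hlt|Hgt|->]; [|lia|exact: incl_refl].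
    apply: incl_appl; apply: IH; lia.
exists (fun x => exists k, In x (As k)); split.
- case=> l Hl.
  have [Hnd _] := HInv (length l).+1.
  have Hi : incl (As (length l).+1) l by move=> x Hx; apply: Hl; by exists (length l).+1.
  have := NoDup_incl_length Hnd Hi; rewrite Hlen; lia.
- move=> n c d ic id Ic Id phi Hfv.
  pose kc i := proj1_sig (constructive_indefinite_description _ (Ic i)).
  pose kd i := proj1_sig (constructive_indefinite_description _ (Id i)).
  have Hkc : forall i, In (c i) (As (kc i)) by move=> i; rewrite /kc; case: constructive_indefinite_description.
  have Hkd : forall i, In (d i) (As (kd i)) by move=> i; rewrite /kd; case: constructive_indefinite_description.
  set K := maxn (\max_i kc i) (\max_i kd i).
  have Hc : forall i, In (c i) (As K).
    move=> i; apply: (Hpre (kc i)) => //; have := @leq_bigmax _ kc i; rewrite /K; lia.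
  have Hd : forall i, In (d i) (As K).
    move=> i; apply: (Hpre (kd i)) => //; have := @leq_bigmax _ kd i; rewrite /K; lia.
  have [_ HK] := HInv K.
  have HD : wfD [:: (phi, n)] by move=> p [<-|[]].
  have [B [_ [_ Hh]]] := HK [:: (phi, n)] 0 HD.
  apply: (Hh (phi, n) (or_introl erefl)).
  + move=> i Hi; rewrite (tassign_lt c Hi); apply: in_or_app; left; exact: Hc.
  + move=> i Hi; rewrite (tassign_lt d Hi); apply: in_or_app; left; exact: Hd.
  + move=> i j Hi Hj; rewrite (tassign_lt c Hi) (tassign_lt c Hj) => /ic E; by have := congr1 val E.
  + move=> i j Hi Hj; rewrite (tassign_lt d Hi) (tassign_lt d Hj) => /id E; by have := congr1 val E.
Qed.

Theorem mainTheorem13 (L : language) (T : theory L) (C : structure L) :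
  complete_theory T -> models C T -> omega_saturated C ->
  ((~ exists I : C -> Prop, ~ finite_set I /\ indiscernible_set I) <->
   (exists (n : nat) (phi : formula L), fv_below n phi /\
      forall a : 'I_n -> C, injective a ->
        exists pi1 pi2 : {perm 'I_n},
          sat (tassign (fun i => a (pi1 i))) phi /\
          ~ sat (tassign (fun i => a (pi2 i))) phi)).
Proof.
move=> _ _ Hsat; split.
- move=> Hno; apply: NNPP => Hn; apply: Hno; apply: (dir1 Hsat).
  move=> n phi Hfv; apply: NNPP => Hne; apply: Hn; exists n, phi; split => // a ainj.
  apply: NNPP => Hx; apply: Hne; exists a; split => // pi1 pi2 H1; apply: NNPP => H2; apply: Hx; by exists pi1, pi2.
- case=> n [phi [Hfv H]]; exact: dir2 H Hfv.
Qed.
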